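(* In the setting of 1D Toom-Cook convolution described in the context, suppose every dot product in the three linear transforms (by $G$, $B^T$ and $A^T$) is computed by linear (recursive, left-to-right) summation of the rounded products, with arbitrary (not necessarily exactly representable) matrix entries. Then $$|\hat s-s|\le |A^T|\big(|G|\,|h|\odot|B^T|\,|x|\big)(n_h+2n+4)\varepsilon+O(\varepsilon^2)$$ and $$\|\hat s-s\|_1\le \|A^T\|_1\,\|G\|_F\,\|h\|_2\,\|B^T\|_F\,\|x\|_2\,(n_h+2n+4)\varepsilon+O(\varepsilon^2).$$
   Context: Let $n_h,n_o\ge1$, $n=n_o+n_h-1$, $p_1,\dots,p_n$ distinct reals, $N_i=1/\prod_{j\ne i}(p_i-p_j)$, $M_{i,j}$ the coefficient of $a^{j-1}$ in $\prod_{k\ne i}(a-p_k)$; $A^T\in\mathbb{R}^{n_o\times n}$ with $A^T_{i,j}=p_j^{i-1}$, $G\in\mathbb{R}^{n\times n_h}$ with $G_{i,j}=p_i^{j-1}N_i$, $B^T\in\mathbb{R}^{n\times n}$ with $B^T_{i,j}=M_{j,i}$. For $h\in F^{n_h}$, $x\in F^n$, $s=A^T(Gh\odot B^Tx)$ is the exact value and $\hat s$ is computed as: $u=fl(fl(G)h)$, $v=fl(fl(B^T)x)$ (row dot products), $w_i=fl(u_iv_i)$, $\hat s=fl(fl(A^T)w)$. Floating point model: unit roundoff $\varepsilon$, no overflow, $fl(y\,\mathrm{op}\,z)=(y\,\mathrm{op}\,z)(1+\delta)$, $fl(y)=y(1+\delta)$, $|\delta|\le\varepsilon$; matrix entries are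 stored rounded. $\odot$ is the Hadamard product, $|\cdot|$ entrywise absolute value, $\|\cdot\|_1$ the vector 1-norm / induced matrix 1-norm, $\|\cdot\|_F$ Frobenius norm, $\|\cdot\|_2$ Euclidean norm. *)

(* Defs.v *)
From HB Require Import structures.
From mathcomp Require Import all_boot all_order all_algebra.
Set Implicit Arguments. Unset Strict Implicit. Unset Printing Implicit Defensive.
Import Order.TTheory GRing.Theory Num.Theory.
Local Open Scope ring_scope.

Section TC.
Variable R : rcfType.

Definition tcN n (p : 'I_n -> R) (i : 'I_n) : R :=
  (\prod_(j < n | j != i) (p i - p j))^-1.
Definition tcLpoly n (p : 'I_n -> R) (i : 'I_n) : {poly R} :=
  \prod_(k < n | k != i) ('X - (p k)%:P).
(* A^T_{i,j} = p_j^{i}   (i.e. p_j^{i-1} with 1-based i) *)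
Definition tcAT no n (p : 'I_n -> R) : 'M[R]_(no, n) :=
  \matrix_(i < no, j < n) p j ^+ i.
Definition tcG n nh (p : 'I_n -> R) : 'M[R]_(n, nh) :=
  \matrix_(i < n, j < nh) (p i ^+ j * tcN p i).
(* B^T_{i,j} = M_{j,i} = coefficient of a^i in prod_{k<>j}(a - p_k) *)
Definition tcBT n (p : 'I_n -> R) : 'M[R]_(n, n) :=
  \matrix_(i < n, j < n) (tcLpoly p j)`_i.

Definition ext m (g : 'I_m -> R) (k : nat) : R :=
  if insub k is Some j then g j else 0.

(* Linear (recursive, left-to-right) summation of the rounded products
   t_k = f_k (1 + mu_k):  S_1 = t_0,  S_{k+1} = (S_k + t_k)(1 + sg_k). *)
Fixpoint lsum (f mu sg : nat -> R) (k : nat) : R :=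
  match k with
  | 0 => 0
  | k'.+1 =>
      match k' with
      | 0 => f 0%N * (1 + mu 0%N)
      | _ => (lsum f mu sg k' + f k' * (1 + mu k')) * (1 + sg k')
      end
  end.

(* Floating point dot product of row i of the stored matrix fl(M)
   (stored entries M_ij (1 + dM_ij)) with the vector y, computed by
   linear summation; mu_ij = relative error of the product with index j,
   sg_ij = relative error of the addition of term j (sg_i0 unused). *)
Definition fl_matvec m k (M dM mu sg : 'M[R]_(m, k)) (y : 'cV[R]_k) : 'cV[R]_m :=
  \col_(i < m) lsum (ext (fun j : 'I_k => (M i j * (1 + dM i j)) * y j 0))
                    (ext (fun j : 'I_k => mu i j)) (ext (fun j : 'I_k => sg i j)) k.

Record fp_errs (no nh n : nat) := FpErrs {
  dG : 'M[R]_(n, nh);  muG : 'M[R]_(n, nh);  sgG : 'M[R]_(n, nh);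
  dB : 'M[R]_(n, n);   muB : 'M[R]_(n, n);   sgB : 'M[R]_(n, n);
  dA : 'M[R]_(no, n);  muA : 'M[R]_(no, n);  sgA : 'M[R]_(no, n);
  dw : 'cV[R]_n }.

Definition mx_bnd m k (M : 'M[R]_(m, k)) (eps : R) := forall i j, `|M i j| <= eps.

Definition errs_bounded no nh n (e : fp_errs no nh n) (eps : R) :=
  mx_bnd (dG e) eps /\ mx_bnd (muG e) eps /\ mx_bnd (sgG e) eps /\
  mx_bnd (dB e) eps /\ mx_bnd (muB e) eps /\ mx_bnd (sgB e) eps /\
  mx_bnd (dA e) eps /\ mx_bnd (muA e) eps /\ mx_bnd (sgA e) eps /\
  mx_bnd (dw e) eps.

Definition hadamard m k (X Y : 'M[R]_(m, k)) : 'M[R]_(m, k) :=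
  \matrix_(i, j) (X i j * Y i j).

Definition conv_exact no nh n (AT : 'M[R]_(no, n)) (G : 'M[R]_(n, nh))
  (BT : 'M[R]_(n, n)) (h : 'cV[R]_nh) (x : 'cV[R]_n) : 'cV[R]_no :=
  AT *m hadamard (G *m h) (BT *m x).

Definition conv_fl no nh n (AT : 'M[R]_(no, n)) (G : 'M[R]_(n, nh))
  (BT : 'M[R]_(n, n)) (h : 'cV[R]_nh) (x : 'cV[R]_n) (e : fp_errs no nh n)
  : 'cV[R]_no :=
  let u := fl_matvec G (dG e) (muG e) (sgG e) h in
  let v := fl_matvec BT (dB e) (muB e) (sgB e) x in
  let w := \col_i (u i 0 * v i 0 * (1 + dw e i 0)) in
  fl_matvec AT (dA e) (muA e) (sgA e) w.

Definition mabs m k (M : 'M[R]_(m, k)) : 'M[R]_(m, k) := map_mx Num.norm M.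
Definition vnorm1 m (v : 'cV[R]_m) : R := \sum_i `|v i 0|.
Definition vnorm2 m (v : 'cV[R]_m) : R := Num.sqrt (\sum_i (v i 0) ^+ 2).
Definition mnormF m k (M : 'M[R]_(m, k)) : R :=
  Num.sqrt (\sum_i \sum_j (M i j) ^+ 2).
Definition mnorm1 m k (M : 'M[R]_(m, k)) : R :=
  \big[Num.max/0]_(j < k) \sum_(i < m) `|M i j|.

End TC.

(* Main.v *)
Require Import Defs.
From HB Require Import structures.
From mathcomp Require Import all_boot all_order all_algebra.
From mathcomp Require Import ring lra zify.
Import Order.TTheory GRing.Theory Num.Theory.
Local Open Scope ring_scope.

Section H.
Variable R : rcfType.
Implicit Types (e : R).

Definition okf e (K : nat) (a : R) := `|a - 1| <= (1 + e) ^+ K - 1.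

Lemma ok0 e : okf e 0 1.
Proof. by rewrite /okf expr0 subrr normr0. Qed.

Lemma okD e d : `|d| <= e -> okf e 1 (1 + d).
Proof. by rewrite /okf expr1 [1 + d]addrC addrK [1 + e]addrC addrK. Qed.

Lemma okM e K L a b : 0 <= e -> okf e K a -> okf e L b -> okf e (K + L) (a * b).
Proof.
move=> e0; rewrite /okf => ha hb.
have -> : a * b - 1 = (a - 1) * (b - 1) + (a - 1) + (b - 1) by ring.
set x := (1 + e) ^+ K - 1 in ha *; set y := (1 + e) ^+ L - 1 in hb *.
have -> : (1 + e) ^+ (K + L) - 1 = x * y + x + y.
  rewrite exprD /x /y; set P := (1 + e) ^+ K; set Q := (1 + e) ^+ L; ring.
apply: le_trans (ler_normD _ _) _; apply: lerD => //.
apply: le_trans (ler_normD _ _) _; apply: lerD => //.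
by rewrite normrM; apply: ler_pM.
Qed.

Lemma okW e K L a : 0 <= e -> (K <= L)%N -> okf e K a -> okf e L a.
Proof.
move=> e0 KL; rewrite /okf => h; apply: le_trans h _; rewrite lerD2r.
by apply: ler_weXn2l => //; rewrite lerDl.
Qed.

Lemma ok_prod e (sg : nat -> R) (r : seq nat) : 0 <= e -> (forall l, `|sg l| <= e) ->
  okf e (size r) (\prod_(l <- r) (1 + sg l)).
Proof.
move=> e0 hs; elim: r => [|a r IH]; first by rewrite big_nil ok0.
by rewrite big_cons /= -add1n; apply: okM => //; apply: okD.
Qed.

Definition fac (mu sg : nat -> R) (k j : nat) :=
  (1 + mu j) * \prod_(maxn j 1 <= l < k) (1 + sg l).

Lemma lsumE f mu sg k : lsum f mu sg k = \sum_(j < k) f j * fac mu sg k j.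
Proof.
elim: k => [|k IH]; first by rewrite big_ord0.
case: k IH => [|k] IH.
  by rewrite big_ord1 /= /fac big_geq // mulr1.
have -> : lsum f mu sg k.+2 = (lsum f mu sg k.+1 + f k.+1 * (1 + mu k.+1)) * (1 + sg k.+1) by [].
rewrite IH [RHS]big_ord_recr /= mulrDl mulr_suml; congr (_ + _).
  apply: eq_bigr => j _; rewrite /fac -!mulrA; congr (_ * (_ * _)).
  rewrite [RHS]big_nat_recr //=.
  have := ltn_ord j; lia.
rewrite /fac -!mulrA.
have -> : maxn k.+1 1 = k.+1 by apply/maxn_idPl.
by rewrite big_nat1.
Qed.

Lemma fac_ok e mu sg k j : 0 <= e -> (j < k)%N -> (forall l, `|mu l| <= e) ->
  (forall l, `|sg l| <= e) -> okf e k (fac mu sg k j).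
Proof.
move=> e0 jk hm hs; rewrite /fac.
have := okM e 1 _ _ _ e0 (okD _ _ (hm j)) (ok_prod e sg (index_iota (maxn j 1) k) e0 hs).
apply: okW => //; rewrite size_iota; lia.
Qed.

Lemma ext_val m (g : 'I_m -> R) (j : 'I_m) : ext g j = g j.
Proof. by rewrite /ext valK. Qed.

Lemma ext_bnd e m (g : 'I_m -> R) : 0 <= e -> (forall j, `|g j| <= e) -> forall l, `|ext g l| <= e.
Proof. by move=> e0 hg l; rewrite /ext; case: insub => [j|]; rewrite ?normr0. Qed.

Lemma fl_matvecE m k (M dM mu sg : 'M[R]_(m, k)) y i :
  fl_matvec M dM mu sg y i 0 = \sum_(j < k) M i j * y j 0 *
    ((1 + dM i j) * fac (ext (fun j => mu i j)) (ext (fun j => sg i j)) k j).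
Proof.
rewrite /fl_matvec mxE lsumE; apply: eq_bigr => j _.
by rewrite ext_val; ring.
Qed.

Lemma fl_ok e m k (dM mu sg : 'M[R]_(m, k)) i (j : 'I_k) : 0 <= e ->
  mx_bnd dM e -> mx_bnd mu e -> mx_bnd sg e ->
  okf e k.+1 ((1 + dM i j) * fac (ext (fun j => mu i j)) (ext (fun j => sg i j)) k j).
Proof.
move=> e0 hd hm hs; rewrite -add1n; apply: okM => //; first exact: okD.
by apply: fac_ok => //; apply: ext_bnd.
Qed.


Lemma triple_eq N L M (a pA dw : 'I_N -> R) (g pG : 'I_N -> 'I_L -> R) (b pB : 'I_N -> 'I_M -> R) :
  \sum_j a j * ((\sum_l g j l * pG j l) * (\sum_m b j m * pB j m) * (1 + dw j)) * pA j
  - \sum_j a j * ((\sum_l g j l) * (\sum_m b j m))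
  = \sum_j \sum_l \sum_m a j * g j l * b j m * (pA j * pG j l * pB j m * (1 + dw j) - 1).
Proof.
rewrite -sumrB; apply: eq_bigr => j _.
set SG := \sum_(l < L) g j l * pG j l; set SB := \sum_(m < M) b j m * pB j m;
set S1 := \sum_(l < L) g j l; set S2 := \sum_(m < M) b j m.
rewrite (_ : a j * (SG * SB * (1 + dw j)) * pA j = (SG * SB) * (a j * (1 + dw j) * pA j)); last by ring.
rewrite (_ : a j * (S1 * S2) = (S1 * S2) * a j); last by ring.
rewrite /SG /SB /S1 /S2 !big_distrlr /= !mulr_suml -sumrB; apply: eq_bigr => l _.
rewrite !mulr_suml -sumrB; apply: eq_bigr => m _; ring.
Qed.

Lemma triple_bnd N L M (t phi : 'I_N -> 'I_L -> 'I_M -> R) d :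
  (forall j l m, `|phi j l m - 1| <= d) ->
  `|\sum_j \sum_l \sum_m t j l m * (phi j l m - 1)| <= (\sum_j \sum_l \sum_m `|t j l m|) * d.
Proof.
move=> hp; rewrite mulr_suml; apply: le_trans (ler_norm_sum _ _ _) _.
apply: ler_sum => j _; rewrite mulr_suml; apply: le_trans (ler_norm_sum _ _ _) _.
apply: ler_sum => l _; rewrite mulr_suml; apply: le_trans (ler_norm_sum _ _ _) _.
apply: ler_sum => m _; rewrite normrM; apply: ler_wpM2l => //.
Qed.

Lemma triple_abs N L M (a : 'I_N -> R) (g : 'I_N -> 'I_L -> R) (b : 'I_N -> 'I_M -> R) :
  \sum_j `|a j| * ((\sum_l `|g j l|) * (\sum_m `|b j m|))
  = \sum_j \sum_l \sum_m `|a j * g j l * b j m|.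
Proof.
apply: eq_bigr => j _; rewrite big_distrlr mulr_sumr; apply: eq_bigr => l _.
rewrite mulr_sumr; apply: eq_bigr => m _; by rewrite !normrM mulrA.
Qed.

Lemma pow_bnd e K : 0 <= e -> e <= 1 ->
  (1 + e) ^+ K - 1 <= K%:R * e + 4%:R ^+ K * e ^+ 2.
Proof.
move=> e0 e1; elim: K => [|K IH]; first by rewrite expr0 subrr expr0 mul1r mul0r add0r sqr_ge0.
have hK : (K%:R : R) <= 4%:R ^+ K.
  rewrite -natrX ler_nat; apply: ltnW; exact: ltn_expl.
have c0 : (0 : R) <= 4%:R ^+ K by apply: exprn_ge0.
set c := 4%:R ^+ K in IH hK c0 *.
have -> : (4%:R : R) ^+ K.+1 = 4%:R * c by rewrite exprS.
rewrite exprSr -natr1.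
set P := (1 + e) ^+ K in IH *.
have h1 : P * (1 + e) <= (1 + K%:R * e + c * e ^+ 2) * (1 + e).
  by apply: ler_wpM2r; [lra | lra].
have h2 : K%:R * e ^+ 2 <= c * e ^+ 2 by apply: ler_wpM2r => //; apply: sqr_ge0.
have h3 : c * e ^+ 3 <= c * e ^+ 2.
  apply: ler_wpM2l => //; rewrite exprS; apply: ler_piMl => //; apply: sqr_ge0.
rewrite !exprS expr0 mulr1 in h1 h2 h3 *.
nra.
Qed.


Lemma cs_sq N (a b : 'I_N -> R) :
  (\sum_i a i * b i) ^+ 2 <= (\sum_i a i ^+ 2) * (\sum_i b i ^+ 2).
Proof.
have E : \sum_i \sum_j (a i * b j - a j * b i) ^+ 2 =
  (\sum_i a i ^+ 2) * (\sum_j b j ^+ 2) + (\sum_i b i ^+ 2) * (\sum_j a j ^+ 2)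
  - 2%:R * ((\sum_i a i * b i) * (\sum_j a j * b j)).
  rewrite !big_distrlr mulr_sumr -big_split -sumrB /=; apply: eq_bigr => i _.
  rewrite mulr_sumr -big_split -sumrB /=; apply: eq_bigr => j _; ring.
have : 0 <= \sum_i \sum_j (a i * b j - a j * b i) ^+ 2.
  by apply: sumr_ge0 => i _; apply: sumr_ge0 => j _; apply: sqr_ge0.
rewrite E; set A := \sum_i a i ^+ 2; set B := \sum_i b i ^+ 2; set S := \sum_i a i * b i.
move=> h; rewrite expr2; lra.
Qed.

Lemma cs N (a b : 'I_N -> R) :
  \sum_i a i * b i <= Num.sqrt (\sum_i a i ^+ 2) * Num.sqrt (\sum_i b i ^+ 2).
Proof.
apply: le_trans (ler_norm _) _.
rewrite -sqrtr_sqr -sqrtrM; last by apply: sumr_ge0 => i _; apply: sqr_ge0.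
by rewrite ler_sqrt ?cs_sq // mulr_ge0 // sumr_ge0 // => i _; apply: sqr_ge0.
Qed.

Lemma rowcs L (G : 'I_L -> R) (h : 'cV[R]_L) :
  \sum_l `|G l| * `|h l 0| <= Num.sqrt (\sum_l G l ^+ 2) * vnorm2 h.
Proof.
apply: le_trans (@cs L (fun l => `|G l|) (fun l => `|h l 0|)) _; rewrite /vnorm2.
under eq_bigr do rewrite real_normK ?num_real //.
by under [X in _ * Num.sqrt X]eq_bigr do rewrite real_normK ?num_real //.
Qed.

Lemma mnorm1_ge0 m k (M : 'M[R]_(m, k)) : 0 <= mnorm1 M.
Proof.
rewrite /mnorm1; apply: (big_ind (fun y => 0 <= y)) => //.
  by move=> y z hy hz; rewrite le_max hy.
by move=> j _; apply: sumr_ge0 => i _.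
Qed.

Lemma colsum_le m k (M : 'M[R]_(m, k)) j : \sum_i `|M i j| <= mnorm1 M.
Proof. rewrite /mnorm1. exact: (le_bigmax _ (fun j => \sum_i `|M i j|)). Qed.

Lemma norm_part K0 N L M (A : 'M[R]_(K0, N)) (G : 'M[R]_(N, L)) (h : 'cV[R]_L)
  (B : 'M[R]_(N, M)) (x : 'cV[R]_M) :
  \sum_i (mabs A *m hadamard (mabs G *m mabs h) (mabs B *m mabs x)) i 0
  <= mnorm1 A * mnormF G * vnorm2 h * mnormF B * vnorm2 x.
Proof.
under eq_bigr do rewrite mxE.
rewrite exchange_big /=.
set g := fun j : 'I_N => Num.sqrt (\sum_l G j l ^+ 2).
set bb := fun j : 'I_N => Num.sqrt (\sum_m B j m ^+ 2).
have step : forall j : 'I_N, \sum_i mabs A i j * hadamard (mabs G *m mabs h) (mabs B *m mabs x) j 0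
   <= mnorm1 A * (vnorm2 h * vnorm2 x) * (g j * bb j).
  move=> j; rewrite -mulr_suml mxE !mxE.
  have e1 : \sum_i mabs A i j = \sum_i `|A i j| by apply: eq_bigr => i _; rewrite mxE.
  have e2 : \sum_l mabs G j l * mabs h l 0 = \sum_l `|G j l| * `|h l 0|
    by apply: eq_bigr => l _; rewrite !mxE.
  have e3 : \sum_l mabs B j l * mabs x l 0 = \sum_l `|B j l| * `|x l 0|
    by apply: eq_bigr => l _; rewrite !mxE.
  rewrite e1 e2 e3.
  have r1 := @rowcs L (G j) h; have r2 := @rowcs M (B j) x.
  have p1 : 0 <= \sum_l `|G j l| * `|h l 0| by apply: sumr_ge0 => l _; apply: mulr_ge0.
  have p2 : 0 <= \sum_l `|B j l| * `|x l 0| by apply: sumr_ge0 => l _; apply: mulr_ge0.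
  have p3 : 0 <= \sum_i `|A i j| by apply: sumr_ge0.
  apply: le_trans (_ : mnorm1 A * ((g j * vnorm2 h) * (bb j * vnorm2 x)) <= _); last first.
    by rewrite le_eqVlt; apply/orP; left; apply/eqP; ring.
  apply: ler_pM => //; [exact: mulr_ge0 | exact: (@colsum_le K0 N A j) | exact: ler_pM].
apply: le_trans (ler_sum _ (fun j _ => step j)) _.
rewrite -mulr_sumr.
have eg : \sum_j g j ^+ 2 = \sum_j \sum_l G j l ^+ 2.
  by apply: eq_bigr => j _; rewrite /g sqr_sqrtr // sumr_ge0 // => l _; exact: sqr_ge0.
have eb : \sum_j bb j ^+ 2 = \sum_j \sum_l B j l ^+ 2.
  by apply: eq_bigr => j _; rewrite /bb sqr_sqrtr // sumr_ge0 // => l _; exact: sqr_ge0.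
have := @cs N g bb; rewrite eg eb /mnormF.
move=> hc.
have q : 0 <= mnorm1 A * (vnorm2 h * vnorm2 x).
  by apply: mulr_ge0; [apply: mnorm1_ge0 | apply: mulr_ge0; apply: sqrtr_ge0].
apply: le_trans (ler_wpM2l q hc) _.
by rewrite le_eqVlt; apply/orP; left; apply/eqP; ring.
Qed.


End H.
Arguments okM {R e K L a b}.
Arguments fac {R}.
Arguments okD {R e d}.
Arguments okW {R e K L a}.
Arguments fl_ok {R e m k dM mu sg} i j.
Arguments triple_bnd {R N L M t phi d}.
Arguments pow_bnd {R e} K.

Theorem mainTheorem2 (R : rcfType) (no nh : nat) (Hno : (0 < no)%N) (Hnh : (0 < nh)%N)
  (p : 'I_(no + nh - 1) -> R) (Hp : injective p)
  (h : 'cV[R]_nh) (x : 'cV[R]_(no + nh - 1)) :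
  let n := (no + nh - 1)%N in
  let AT := tcAT no p in
  let G := tcG nh p in
  let BT := tcBT p in
  let s := conv_exact AT G BT h x in
  exists C : R, exists eps0 : R, 0 < eps0 /\
    forall eps : R, 0 <= eps -> eps <= eps0 ->
    forall e : fp_errs R no nh n, errs_bounded e eps ->
    let shat := conv_fl AT G BT h x e in
    (forall i : 'I_no,
       `|shat i 0 - s i 0|
         <= (mabs AT *m hadamard (mabs G *m mabs h) (mabs BT *m mabs x)) i 0
              * (nh + 2 * n + 4)%:R * eps + C * eps ^+ 2)
    /\ vnorm1 (shat - s)
         <= mnorm1 AT * mnormF G * vnorm2 h * mnormF BT * vnorm2 x
              * (nh + 2 * n + 4)%:R * eps + C * eps ^+ 2.
Proof.
move=> n AT G BT s; clearbody AT G BT.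
set K := (nh + 2 * n + 4)%N.
pose T (i : 'I_no) := (mabs AT *m hadamard (mabs G *m mabs h) (mabs BT *m mabs x)) i 0.
have T0 : forall i, 0 <= T i.
  move=> i; rewrite /T mxE; apply: sumr_ge0 => j _; rewrite !mxE.
  apply: mulr_ge0 => //; apply: mulr_ge0; apply: sumr_ge0 => l _; rewrite !mxE; exact: mulr_ge0.
exists (4%:R ^+ K * \sum_i T i), 1; split; first exact: ltr01.
move=> eps e0 e1 e be shat.
case: be => [hdG [hmuG [hsgG [hdB [hmuB [hsgB [hdA [hmuA [hsgA hdw]]]]]]]]].
have key : forall i, `|shat i 0 - s i 0| <= T i * ((1 + eps) ^+ K - 1).
  move=> i.
  pose PA (j : 'I_n) := (1 + dA e i j) * fac (ext (fun j => muA e i j)) (ext (fun j => sgA e i j)) n j.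
  pose PG (j : 'I_n) (l : 'I_nh) := (1 + dG e j l) * fac (ext (fun l => muG e j l)) (ext (fun l => sgG e j l)) nh l.
  pose PB (j : 'I_n) (m : 'I_n) := (1 + dB e j m) * fac (ext (fun m => muB e j m)) (ext (fun m => sgB e j m)) n m.
  have Eshat : shat i 0 = \sum_j AT i j * ((\sum_l (G j l * h l 0) * PG j l) *
        (\sum_m (BT j m * x m 0) * PB j m) * (1 + dw e j 0)) * PA j.
    rewrite /shat /conv_fl fl_matvecE; apply: eq_bigr => j _; rewrite mxE !fl_matvecE //.
  have Es : s i 0 = \sum_j AT i j * ((\sum_l G j l * h l 0) * (\sum_m BT j m * x m 0)).
    by rewrite /s /conv_exact !mxE; apply: eq_bigr => j _; rewrite !mxE.
  rewrite Eshat Es triple_eq.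
  have hphi : forall j l m, `|PA j * PG j l * PB j m * (1 + dw e j 0) - 1| <= (1 + eps) ^+ K - 1.
    move=> j l m.
    have := okM e0 (okM e0 (okM e0 (fl_ok i j e0 hdA hmuA hsgA) (fl_ok j l e0 hdG hmuG hsgG))
              (fl_ok j m e0 hdB hmuB hsgB)) (okD (hdw j 0)).
    by apply: okW => //; rewrite /K; lia.
  apply: le_trans (triple_bnd (t := fun j l m => AT i j * (G j l * h l 0) * (BT j m * x m 0))
       (phi := fun j l m => PA j * PG j l * PB j m * (1 + dw e j 0)) hphi) _.
  apply: ler_wpM2r; first by rewrite subr_ge0; apply: exprn_ege1; rewrite lerDl.
  rewrite -triple_abs /T mxE le_eqVlt; apply/orP; left; apply/eqP; apply: eq_bigr => j _.
  rewrite !mxE; congr (_ * (_ * _)); apply: eq_bigr => l _; rewrite !mxE normrM //.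
have key2 : forall i, `|shat i 0 - s i 0| <= T i * K%:R * eps + 4%:R ^+ K * T i * eps ^+ 2.
  move=> i; apply: le_trans (key i) _.
  apply: le_trans (ler_wpM2l (T0 i) (pow_bnd K e0 e1)) _.
  by rewrite le_eqVlt; apply/orP; left; apply/eqP; ring.
have Tle : forall i, T i <= \sum_i T i.
  move=> i; rewrite (bigD1 i) //= lerDl; apply: sumr_ge0 => k _; exact: T0.
have C0 : 0 <= eps ^+ 2 by exact: sqr_ge0.
have c4 : (0 : R) <= 4%:R ^+ K by exact: exprn_ge0.
split.
  move=> i; apply: le_trans (key2 i) _; rewrite lerD2l -!mulrA ler_wpM2l //.
  by apply: ler_wpM2r.
rewrite /vnorm1.
apply: le_trans (_ : \sum_i (T i * K%:R * eps + 4%:R ^+ K * T i * eps ^+ 2) <= _).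
  apply: ler_sum => i _; have -> : (shat - s) i 0 = shat i 0 - s i 0 by rewrite !mxE.
  exact: key2.
rewrite big_split /= -!mulr_suml -mulr_sumr lerD2r.
apply: ler_wpM2r => //; apply: ler_wpM2r => //; exact: norm_part.
Qed.
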